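(* In the non-exceptional case, for every integer $s$ the tuples $u=(u_1,\dots,u_{2r})$ and $v=v(s)=(v_1,\dots,v_{2r})$ defined by $$u_{2\rho-1}:=\check\mu_{a_{j_\rho}},\quad u_{2\rho}:=\check\mu_{1+a_{j_\rho}},\quad v_{2\rho-1}:=\lambda_{1+j_{\rho-1}}-s,\quad v_{2\rho}:=\lambda_{j_\rho}-s\qquad(\rho=1,\dots,r)$$ belong to $X_0^+(2r)$, with $u_i+u_{2r+1-i}=-w$ and $v_i+v_{2r+1-i}=w'+n-m-1-2s$ for all $i$.
   Context: Let $n,m\ge1$, not both $1$, and not both odd (non-exceptional case). For $N\ge1$: $L_0^+(N):=\{(w,l)\in\mathbb Z\times\mathbb Z^N:\ l_1>\dots>l_N,\ l_i+l_{N+1-i}=0,\ w+l_i\equiv N+1 \bmod 2\}$; $X^+(N):=\{x\in\mathbb Z^N:x_1\ge\dots\ge x_N\}$; $X_0^+(N):=\{x\in X^+(N):x_i+x_{N+1-i}\text{ independent of } i\}$. Bijection $L_0^+(N)\to X_0^+(N)$: $(w,l)\mapsto\mu$, $\mu_i=\frac{w+l_i+2i-1-N}{2}$; inverse $w=\mu_1+\mu_N$, $l_i=2\mu_i+N+1-w-2i$. Let $\mu\in X_0^+(n)$, $\nu\in X_0^+(m)$ correspond to $(w,l)$, $(w',l')$; $\check\mu_i:=-\mu_{n+1-i}$. Standing assumptions: $l_1>l'_1$ and $l_i\neq l'_j$ for all $i,j$. Position tuple: $a_j\in\{1,\dots,n-1\}$ unique with $l_{a_j}>l'_j\ge l_{1+a_j}$.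 Jump indices: $j\in\{1,\dots,m-1\}$ with $a_j<a_{j+1}$, listed $j_1<\dots<j_k$; $j_0:=0$, $j_{k+1}:=m$, $r:=k+1$. $\lambda_j:=\nu_j+a_j-j$. *)

(* Defs.v *)
(* Tuples are 1-based functions nat -> int; only the entries
   with index in 1..N are meaningful. *)
From HB Require Import structures.
From mathcomp Require Import all_boot all_order all_algebra.
Set Implicit Arguments. Unset Strict Implicit. Unset Printing Implicit Defensive.
Import Order.TTheory GRing.Theory Num.Theory.
Local Open Scope ring_scope.

Definition Xplus (N : nat) (x : nat -> int) : Prop :=
  forall i : nat, (1 <= i)%N -> (i < N)%N -> x i.+1 <= x i.

Definition X0plus (N : nat) (x : nat -> int) : Prop :=
  Xplus N x /\ exists c : int, forall i : nat, (1 <= i <= N)%N -> x i + x (N.+1 - i)%N = c.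

(* the bijection X_0^+(N) -> L_0^+(N): w = mu_1 + mu_N, l_i = 2mu_i + N + 1 - w - 2i *)
Definition wt (N : nat) (mu : nat -> int) : int := mu 1%N + mu N.
Definition lseq (N : nat) (mu : nat -> int) (i : nat) : int :=
  2 * mu i + (N.+1)%:Z - wt N mu - 2 * (i%:Z).

Definition chk (N : nat) (mu : nat -> int) (i : nat) : int := - mu (N.+1 - i)%N.

Definition is_position (n m : nat) (l l' : nat -> int) (a : nat -> nat) : Prop :=
  forall j : nat, (1 <= j <= m)%N ->
    [/\ (1 <= a j <= n.-1)%N, l' j < l (a j) & l (a j).+1 <= l' j].

Definition jumps (m : nat) (a : nat -> nat) : seq nat :=
  [seq j <- iota 1 m.-1 | (a j < a j.+1)%N].

Definition jidx (m : nat) (a : nat -> nat) (rho : nat) : nat :=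
  if rho == 0%N then 0%N
  else if (rho <= size (jumps m a))%N then nth 0%N (jumps m a) rho.-1 else m.

Definition lam (nu : nat -> int) (a : nat -> nat) (j : nat) : int :=
  nu j + (a j)%:Z - j%:Z.

(* Main.v *)
Require Import Defs.
From HB Require Import structures.
From mathcomp Require Import all_boot all_order all_algebra zify.
Import Order.TTheory GRing.Theory Num.Theory.
Local Open Scope ring_scope.

Lemma mono_int (f : nat -> int) lo hi :
  (forall i, (lo <= i)%N -> (i < hi)%N -> f i.+1 <= f i) ->
  forall i j, (lo <= i)%N -> (i <= j)%N -> (j <= hi)%N -> f j <= f i.
Proof.
move=> H i j hi1 hij hj.
elim: j hij hj => [|j IH] hij hj.
  by have -> : i = 0%N by lia.
have [->|hlt] := eqVneq i j.+1; first by [].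
have h1 : f j <= f i by apply: IH; lia.
have h2 : f j.+1 <= f j by apply: H; lia.
exact: le_trans h2 h1.
Qed.

Lemma l_step N mu i : Xplus N mu -> (1 <= i)%N -> (i < N)%N ->
  lseq N mu i.+1 + 2 <= lseq N mu i.
Proof. move=> X h1 h2; have := X i h1 h2; rewrite /lseq; lia. Qed.

Lemma l_mono N mu i j : Xplus N mu -> (1 <= i)%N -> (i <= j)%N -> (j <= N)%N ->
  lseq N mu j + 2 * (j - i)%N%:Z <= lseq N mu i.
Proof.
move=> X h1 h2 h3.
have P : forall k, (1 <= k)%N -> (k < N)%N ->
   lseq N mu k.+1 + 2 * k.+1%:Z <= lseq N mu k + 2 * k%:Z.
  move=> k k1 k2; have := @l_step N mu k X k1 k2; lia.
have := @mono_int (fun k => lseq N mu k + 2 * k%:Z) 1 N P i j h1 h2 h3.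
move=> /= H; lia.
Qed.

Lemma l_sym N mu i : X0plus N mu -> (1 <= i <= N)%N ->
  lseq N mu (N.+1 - i) = - lseq N mu i.
Proof.
move=> [X [c Hc]] hi.
have h1 := Hc i hi. have h2 := Hc 1%N ltac:(lia).
rewrite subSS subn0 in h2.
rewrite /lseq /wt; lia.
Qed.

Lemma l_mono_w N mu i j : Xplus N mu -> (1 <= i)%N -> (i <= j)%N -> (j <= N)%N ->
  lseq N mu j <= lseq N mu i.
Proof. move=> X h1 h2 h3; have := @l_mono N mu i j X h1 h2 h3; lia. Qed.

Lemma a_mono n m mu nu a j : X0plus n mu -> X0plus m nu ->
  is_position n m (lseq n mu) (lseq m nu) a -> (1 <= j)%N -> (j < m)%N ->
  (a j <= a j.+1)%N.
Proof.
move=> [X _] [Y _] P h1 h2.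
have [A1 A2 A3] := P j ltac:(lia).
have [B1 B2 B3] := P j.+1 ltac:(lia).
rewrite leqNgt; apply/negP => hlt.
have := @l_mono_w n mu (a j.+1).+1 (a j) X ltac:(lia) ltac:(lia) ltac:(lia).
have := @l_step m nu j Y h1 h2.
lia.
Qed.

Lemma lam_step n m mu nu a j : X0plus n mu -> X0plus m nu ->
  is_position n m (lseq n mu) (lseq m nu) a -> (1 <= j)%N -> (j < m)%N ->
  lam nu a j.+1 <= lam nu a j.
Proof.
move=> X0 Y0 P h1 h2.
have am := @a_mono n m mu nu a j X0 Y0 P h1 h2.
move: X0 Y0 => [X _] [Y _].
have [A1 A2 A3] := P j ltac:(lia).
have [B1 B2 B3] := P j.+1 ltac:(lia).
have e : lseq m nu j - lseq m nu j.+1 = 2 * (nu j - nu j.+1) + 2 by rewrite /lseq; lia.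
have [eq|neq] := eqVneq (a j.+1) (a j).
  have := Y j h1 h2. rewrite /lam eq; lia.
have := @l_mono n mu (a j).+1 (a j.+1) X ltac:(lia) ltac:(lia) ltac:(lia).
rewrite /lam; lia.
Qed.

Lemma a_sym n m mu nu a j : X0plus n mu -> X0plus m nu ->
  (forall i j : nat, (1 <= i <= n)%N -> (1 <= j <= m)%N -> lseq n mu i != lseq m nu j) ->
  is_position n m (lseq n mu) (lseq m nu) a -> (1 <= j <= m)%N ->
  a (m.+1 - j)%N = (n - a j)%N.
Proof.
move=> X0 Y0 D P hj.
have [A1 A2 A3] := P j hj.
have [B1 B2 B3] := P (m.+1 - j)%N ltac:(lia).
have dj := D (a j).+1 j ltac:(lia) hj.
have A3' : lseq n mu (a j).+1 < lseq m nu j by rewrite lt_neqAle A3 dj.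
have s1 := @l_sym n mu (a j) X0 ltac:(lia).
have s2 := @l_sym n mu (a j).+1 X0 ltac:(lia).
have s3 := @l_sym m nu j Y0 hj.
move: X0 Y0 => [X _] [Y _].
have [lt|ge] := ltnP (a (m.+1 - j)%N) (n - a j)%N.
  have := @l_mono_w n mu (a (m.+1 - j)%N).+1 (n - a j)%N X ltac:(lia) ltac:(lia) ltac:(lia).
  rewrite subSS in s2. lia.
have [gt|le] := ltnP (n - a j)%N (a (m.+1 - j)%N).
  have := @l_mono_w n mu (n.+1 - a j)%N (a (m.+1 - j)%N) X ltac:(lia) ltac:(lia) ltac:(lia).
  lia.
lia.
Qed.

Lemma jumps_mem m a x : (x \in jumps m a) = [&& (1 <= x)%N, (x < m)%N & (a x < a x.+1)%N].
Proof.
rewrite /jumps mem_filter mem_iota.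
case: (a x < a x.+1)%N; rewrite ?andbF ?andbT //.
have [->|mp] := eqVneq m 0%N; first by rewrite /=; lia.
apply/idP/idP; lia.
Qed.

Lemma jumps_sorted m a : sorted ltn (jumps m a).
Proof. apply: sorted_filter; [exact: ltn_trans | exact: iota_ltn_sorted]. Qed.

Lemma jumps_nth_mem m a i : (i < size (jumps m a))%N -> nth 0%N (jumps m a) i \in jumps m a.
Proof. exact: mem_nth. Qed.

Lemma jumps_sym n m a :
  (forall j, (1 <= j <= m)%N -> (a j <= n.-1)%N) ->
  (forall j, (1 <= j <= m)%N -> a (m.+1 - j)%N = (n - a j)%N) ->
  [seq (m - x)%N | x <- rev (jumps m a)] = jumps m a.
Proof.
move=> Hb Hs.
have memsym : forall x, x \in jumps m a -> (m - x)%N \in jumps m a.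
  move=> x; rewrite !jumps_mem => /and3P [x1 x2 x3].
  have e1 := Hs x.+1 ltac:(lia). have e2 := Hs x ltac:(lia).
  rewrite subSS in e1.
  have b1 := Hb x.+1 ltac:(lia).
  have -> : (m - x).+1 = (m.+1 - x)%N by lia.
  rewrite e1 e2. apply/and3P; split; lia.
apply: (irr_sorted_eq ltn_trans ltnn).
- rewrite sorted_map rev_sorted.
  apply: (@sub_in_sorted _ (fun x => (x < m)%N) ltn); last exact: jumps_sorted.
    move=> x y hx hy /= hxy. rewrite /relpre /=. lia.
  apply/allP => x; rewrite jumps_mem => /and3P [? ? ?]; done.
- exact: jumps_sorted.
- move=> y; apply/mapP/idP.
    by move=> [x]; rewrite mem_rev => /memsym hx ->.
  move=> hy; exists (m - y)%N; first by rewrite mem_rev memsym.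
  move: hy; rewrite jumps_mem => /and3P [? ? ?]; lia.
Qed.

Lemma J0 m a : jidx m a 0 = 0%N.
Proof. by []. Qed.

Lemma Jr m a : jidx m a (size (jumps m a)).+1 = m.
Proof. by rewrite /jidx /= ltnn. Qed.

Lemma Jin m a rho : (1 <= rho <= size (jumps m a))%N ->
  jidx m a rho = nth 0%N (jumps m a) rho.-1.
Proof. by move=> /andP [h1 h2]; rewrite /jidx h2; case: rho h1 h2. Qed.

Lemma Jjump m a rho : (1 <= rho <= size (jumps m a))%N ->
  [&& (1 <= jidx m a rho)%N, (jidx m a rho < m)%N & (a (jidx m a rho) < a (jidx m a rho).+1)%N].
Proof. move=> h; rewrite Jin // -jumps_mem; apply: mem_nth. move: h; set K := size _ => h. lia. Qed.

Lemma Jbound m a rho : (rho <= (size (jumps m a)).+1)%N -> (jidx m a rho <= m)%N.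
Proof.
move=> h; have [->|r0] := eqVneq rho 0%N; first by [].
have [hk|hk] := leqP rho (size (jumps m a)).
  have hh : (1 <= rho <= size (jumps m a))%N by rewrite hk andbT lt0n.
  by have /and3P [? ? ?] := @Jjump m a rho hh; lia.
have -> : rho = (size (jumps m a)).+1 by apply/eqP; rewrite eqn_leq h hk.
by rewrite Jr.
Qed.

Lemma Jpos m a rho : (1 <= m)%N -> (1 <= rho <= (size (jumps m a)).+1)%N -> (1 <= jidx m a rho)%N.
Proof.
move=> m1 /andP [h1 h2].
have [hk|hk] := leqP rho (size (jumps m a)).
  have hh : (1 <= rho <= size (jumps m a))%N by rewrite hk andbT.
  by have /and3P [? ? ?] := @Jjump m a rho hh; lia.
have -> : rho = (size (jumps m a)).+1 by apply/eqP; rewrite eqn_leq h2 hk.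
by rewrite Jr.
Qed.

Lemma Jlt m a rho : (1 <= m)%N -> (1 <= rho <= (size (jumps m a)).+1)%N ->
  (jidx m a rho.-1 < jidx m a rho)%N.
Proof.
move=> m1 h.
have [->|r1] := eqVneq rho 1%N; first by rewrite J0; apply: Jpos.
have hh : (1 <= rho.-1 <= size (jumps m a))%N by move: h r1; set K := size _; lia.
have e1 := @Jin m a rho.-1 hh.
have /and3P [_ b _] := @Jjump m a rho.-1 hh.
have [hk|hk] := leqP rho (size (jumps m a)).
  have hh2 : (1 <= rho <= size (jumps m a))%N by move: h r1 hk; set K := size _; lia.
  rewrite e1 Jin //.
  apply: (sorted_ltn_nth ltn_trans 0%N (jumps_sorted m a)); rewrite ?inE /=;
   move: hh2; set K := size _; lia.
move: b; have -> : rho = (size (jumps m a)).+1 by move: h hk; set K := size _; lia.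
by rewrite Jr.
Qed.

Lemma Jsym m a rho : (1 <= m)%N ->
  [seq (m - x)%N | x <- rev (jumps m a)] = jumps m a ->
  (rho <= (size (jumps m a)).+1)%N ->
  jidx m a ((size (jumps m a)).+1 - rho) = (m - jidx m a rho)%N.
Proof.
move=> m1 E h.
have [->|r0] := eqVneq rho 0%N; first by rewrite subn0 Jr J0 subn0.
have [hk|hk] := leqP rho (size (jumps m a)); last first.
  have -> : rho = (size (jumps m a)).+1 by move: h hk; set K := size _; lia.
  by rewrite subnn J0 Jr subnn.
have hh : (1 <= rho <= size (jumps m a))%N by move: r0 hk; set K := size _; lia.
have hh2 : (1 <= (size (jumps m a)).+1 - rho <= size (jumps m a))%N
  by move: r0 hk; set K := size _; lia.
rewrite (@Jin m a rho hh) (@Jin m a _ hh2).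
have := congr1 (fun t => nth 0%N t ((size (jumps m a)).+1 - rho).-1) E => /= <-.
rewrite (nth_map 0%N); last by rewrite size_rev; move: hh2; set K := size _; lia.
rewrite nth_rev; last by move: hh2; set K := size _; lia.
congr (_ - nth _ _ _)%N; move: hh; set K := size _; lia.
Qed.

Lemma Jnojump m a rho j : (1 <= m)%N -> (1 <= rho <= (size (jumps m a)).+1)%N ->
  (jidx m a rho.-1 < j)%N -> (j < jidx m a rho)%N -> j \notin jumps m a.
Proof.
move=> m1 h hlo hhi; apply/negP => hj.
have srt : sorted leq (jumps m a) by have := jumps_sorted m a; rewrite ltn_sorted_uniq_leq => /andP [].
set i := index j (jumps m a).
have ik : (i < size (jumps m a))%N by rewrite index_mem.
have ni : nth 0%N (jumps m a) i = j by rewrite nth_index.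
have lo : (rho.-1 <= i)%N.
  have [->|r1] := eqVneq rho 1%N; first by [].
  rewrite leqNgt; apply/negP => hlt.
  have hh : (1 <= rho.-1 <= size (jumps m a))%N by move: h r1; set K := size _; lia.
  move: hlo; rewrite (@Jin m a _ hh) -ni.
  have := sorted_leq_nth leq_trans leqnn 0%N srt i rho.-1.-1.
  rewrite !inE => H; have := H ik ltac:(move: hh; set K := size _; lia) ltac:(lia). lia.
have [hk|hk] := leqP rho (size (jumps m a)).
  have hh : (1 <= rho <= size (jumps m a))%N by move: h hk; set K := size _; lia.
  move: hhi; rewrite (@Jin m a _ hh) -ni.
  have := sorted_leq_nth leq_trans leqnn 0%N srt rho.-1 i.
  rewrite !inE => H; have := H ltac:(move: hh; set K := size _; lia) ik lo. lia.
move: ik lo hk h; set K := size _; lia.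
Qed.

Lemma Jconst m a rho j : (1 <= m)%N ->
  (forall j, (1 <= j)%N -> (j < m)%N -> (a j <= a j.+1)%N) ->
  (1 <= rho <= (size (jumps m a)).+1)%N ->
  (jidx m a rho.-1 < j)%N -> (j <= jidx m a rho)%N -> a j = a (jidx m a rho).
Proof.
move=> m1 Hm h hlo hhi.
have Jm := @Jbound m a rho ltac:(move: h; set K := size _; lia).
have [d ed] : exists d, j = (jidx m a rho - d)%N by exists (jidx m a rho - j)%N; lia.
subst j; move: hlo {hhi}; elim: d => [|d IH] hlo; first by rewrite subn0.
have e := IH ltac:(lia).
have nj := @Jnojump m a rho (jidx m a rho - d.+1)%N m1 h hlo ltac:(lia).
move: nj; rewrite jumps_mem => nj.
have := Hm (jidx m a rho - d.+1)%N ltac:(lia) ltac:(lia).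
have -> : (jidx m a rho - d.+1).+1 = (jidx m a rho - d)%N by lia.
rewrite -e. move: nj. rewrite (_ : (jidx m a rho - d.+1).+1 = (jidx m a rho - d)%N); last by lia.
move=> nj le; apply/eqP; rewrite eqn_leq le /=.
move: nj; rewrite negb_and !negb_and -!leqNgt => /orP [|/orP []]; try lia.
Qed.

Lemma split_idx R i : (1 <= i <= 2 * R)%N ->
  exists rho, (1 <= rho <= R)%N /\ (i = (2 * rho).-1 \/ i = 2 * rho)%N.
Proof. move=> h; exists ((i + 1) %/ 2)%N; lia. Qed.

Lemma wt_sum N mu i : X0plus N mu -> (1 <= i <= N)%N -> mu i + mu (N.+1 - i)%N = wt N mu.
Proof.
move=> [_ [c Hc]] hi; rewrite (Hc i hi) /wt.
have := Hc 1%N ltac:(lia); rewrite subSS subn0 => ->; by [].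
Qed.

Theorem lemma5p1 (n m : nat) (mu nu : nat -> int) (a : nat -> nat) (s : int)
  (u v : nat -> int) :
  (1 <= n)%N -> (1 <= m)%N -> ~ (n = 1%N /\ m = 1%N) -> ~~ (odd n && odd m) ->
  X0plus n mu -> X0plus m nu ->
  lseq m nu 1 < lseq n mu 1 ->
  (forall i j : nat, (1 <= i <= n)%N -> (1 <= j <= m)%N -> lseq n mu i != lseq m nu j) ->
  is_position n m (lseq n mu) (lseq m nu) a ->
  let r := (size (jumps m a)).+1 in
  (forall rho : nat, (1 <= rho <= r)%N ->
     u (2 * rho).-1%N = chk n mu (a (jidx m a rho)) /\
     u (2 * rho)%N = chk n mu (a (jidx m a rho)).+1) ->
  (forall rho : nat, (1 <= rho <= r)%N ->
     v (2 * rho).-1%N = lam nu a (jidx m a rho.-1).+1 - s /\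
     v (2 * rho)%N = lam nu a (jidx m a rho) - s) ->
  [/\ X0plus (2 * r) u, X0plus (2 * r) v,
      (forall i : nat, (1 <= i <= 2 * r)%N -> u i + u ((2 * r).+1 - i)%N = - wt n mu) &
      (forall i : nat, (1 <= i <= 2 * r)%N ->
         v i + v ((2 * r).+1 - i)%N = wt m nu + n%:Z - m%:Z - 1 - 2 * s)].
Proof.
move=> n1 m1 _ _ X0 Y0 _ D P r Hu Hv.
have Hb : forall j, (1 <= j <= m)%N -> (1 <= a j <= n.-1)%N.
  by move=> j hj; have [] := P j hj.
have Hs : forall j, (1 <= j <= m)%N -> a (m.+1 - j)%N = (n - a j)%N.
  by move=> j hj; exact: (@a_sym n m mu nu a j X0 Y0 D P hj).
have Hm : forall j, (1 <= j)%N -> (j < m)%N -> (a j <= a j.+1)%N.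
  by move=> j h1 h2; exact: (@a_mono n m mu nu a j X0 Y0 P h1 h2).
have E := @jumps_sym n m a (fun j hj => proj2 (andP (Hb j hj))) Hs.
have mumono : forall i j, (1 <= i)%N -> (i <= j)%N -> (j <= n)%N -> mu j <= mu i.
  by move=> i j; apply: mono_int => k k1 k2; case: X0 => X _; exact: X.
have lammono : forall i j, (1 <= i)%N -> (i <= j)%N -> (j <= m)%N -> lam nu a j <= lam nu a i.
  by move=> i j; apply: mono_int => k k1 k2; exact: (@lam_step n m mu nu a k X0 Y0 P k1 k2).
have lamsum : forall j, (1 <= j <= m)%N ->
    lam nu a j + lam nu a (m.+1 - j)%N = wt m nu + n%:Z - m%:Z - 1.
  move=> j hj; have := @wt_sum m nu j Y0 hj; have := Hs j hj; have := Hb j hj.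
  rewrite /lam; lia.
have Jsy := fun rho => @Jsym m a rho m1 E.
have Jco := fun rho j => @Jconst m a rho j m1 Hm.
have Jl := fun rho => @Jlt m a rho m1.
have Jp := fun rho => @Jpos m a rho m1.
have Jb := @Jbound m a.
have Jj := @Jjump m a.
rewrite /r in Hu Hv *; clear r.
move: Jsy Jco Jl Jp Jb Jj Hu Hv.
set J := jidx m a; set k := size (jumps m a).
move=> Jsy Jco Jl Jp Jb Jj Hu Hv.
have K1 : forall rho, (1 <= rho <= k.+1)%N -> (a (J rho) + a (J (k.+2 - rho)%N) = n)%N.
  move=> rho hr.
  have e1 : J (k.+2 - rho)%N = (m - J rho.-1)%N.
    rewrite -Jsy; last by lia. congr J; lia.
  have l1 := Jl rho hr. have b1 := Jb rho ltac:(lia).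
  have e2 := Hs (J rho.-1).+1 ltac:(lia).
  have e3 := Jco rho (J rho.-1).+1 hr ltac:(lia) ltac:(lia).
  have b2 := Hb (J rho) ltac:(have := Jp rho hr; have := Jb rho ltac:(lia); lia).
  rewrite e1 (_ : (m - J rho.-1)%N = (m.+1 - (J rho.-1).+1)%N); last by lia.
  rewrite e2 e3; lia.
have Au : forall rho, (1 <= rho <= k.+1)%N ->
   u (2 * rho).-1%N = - mu (n.+1 - a (J rho))%N /\ u (2 * rho)%N = - mu (n - a (J rho))%N.
  by move=> rho hr; have [-> ->] := Hu rho hr; rewrite /chk subSS.
have usum : forall i, (1 <= i <= 2 * k.+1)%N -> u i + u ((2 * k.+1).+1 - i)%N = - wt n mu.
  move=> i hi; have [rho [hr [-> | ->]]] := @split_idx k.+1 i hi.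
  - have hr' : (1 <= k.+2 - rho <= k.+1)%N by lia.
    have -> : ((2 * k.+1).+1 - (2 * rho).-1)%N = (2 * (k.+2 - rho))%N by lia.
    have [-> _] := Au rho hr; have [_ ->] := Au _ hr'.
    have kk := K1 rho hr. have b := Hb (J rho) ltac:(have := Jp rho hr; have := Jb rho ltac:(lia); lia).
    rewrite (_ : (n - a (J (k.+2 - rho)%N))%N = a (J rho)); last by lia.
    have := @wt_sum n mu (a (J rho)) X0 ltac:(lia); lia.
  - have hr' : (1 <= k.+2 - rho <= k.+1)%N by lia.
    have -> : ((2 * k.+1).+1 - (2 * rho))%N = (2 * (k.+2 - rho)).-1%N by lia.
    have [_ ->] := Au rho hr; have [-> _] := Au _ hr'.
    have kk := K1 rho hr. have b := Hb (J rho) ltac:(have := Jp rho hr; have := Jb rho ltac:(lia); lia).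
    rewrite (_ : (n.+1 - a (J (k.+2 - rho)%N))%N = (a (J rho)).+1); last by lia.
    have := @wt_sum n mu (a (J rho)).+1 X0 ltac:(lia).
    rewrite (_ : (n.+1 - (a (J rho)).+1)%N = (n - a (J rho))%N); last by lia.
    lia.
have vsum : forall i, (1 <= i <= 2 * k.+1)%N ->
    v i + v ((2 * k.+1).+1 - i)%N = wt m nu + n%:Z - m%:Z - 1 - 2 * s.
  move=> i hi; have [rho [hr [-> | ->]]] := @split_idx k.+1 i hi.
  - have hr' : (1 <= k.+2 - rho <= k.+1)%N by lia.
    have -> : ((2 * k.+1).+1 - (2 * rho).-1)%N = (2 * (k.+2 - rho))%N by lia.
    have [-> _] := Hv rho hr; have [_ ->] := Hv _ hr'.
    have e1 : J (k.+2 - rho)%N = (m.+1 - (J rho.-1).+1)%N.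
      rewrite (_ : (k.+2 - rho = k.+1 - rho.-1)%N); last by lia.
      rewrite Jsy; last by lia. lia.
    have l1 := Jl rho hr. have b1 := Jb rho ltac:(lia).
    rewrite e1; have := lamsum (J rho.-1).+1 ltac:(lia); lia.
  - have hr' : (1 <= k.+2 - rho <= k.+1)%N by lia.
    have -> : ((2 * k.+1).+1 - (2 * rho))%N = (2 * (k.+2 - rho)).-1%N by lia.
    have [_ ->] := Hv rho hr; have [-> _] := Hv _ hr'.
    have e1 : (J (k.+2 - rho).-1).+1 = (m.+1 - J rho)%N.
      rewrite (_ : ((k.+2 - rho).-1 = k.+1 - rho)%N); last by lia.
      rewrite Jsy; last by lia. have := Jb rho ltac:(lia); have := Jp rho hr; lia.
    have b1 := Jb rho ltac:(lia). have p1 := Jp rho hr.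
    rewrite e1; have := lamsum (J rho) ltac:(lia); lia.
split.
- split; last by exists (- wt n mu).
  move=> i i1 i2; have [rho [hr [ei | ei]]] := @split_idx k.+1 i ltac:(lia).
  + have -> : i.+1 = (2 * rho)%N by lia.
    rewrite ei; have [-> ->] := Au rho hr.
    have b := Hb (J rho) ltac:(have := Jp rho hr; have := Jb rho ltac:(lia); lia).
    rewrite lerN2; apply: mumono; lia.
  + have hr1 : (1 <= rho.+1 <= k.+1)%N by lia.
    have -> : i.+1 = (2 * rho.+1).-1%N by lia.
    rewrite ei; have [_ ->] := Au rho hr; have [-> _] := Au rho.+1 hr1.
    have hk : (1 <= rho <= k)%N by lia.
    have /and3P [j1 j2 j3] := Jj rho hk.
    have c := Jco rho.+1 (J rho).+1 hr1 ltac:(by []) ltac:(have := Jl rho.+1 hr1; by []).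
    have b := Hb (J rho.+1) ltac:(have := Jp rho.+1 hr1; have := Jb rho.+1 ltac:(lia); lia).
    rewrite lerN2; apply: mumono; lia.
- split; last by exists (wt m nu + n%:Z - m%:Z - 1 - 2 * s).
  move=> i i1 i2; have [rho [hr [ei | ei]]] := @split_idx k.+1 i ltac:(lia).
  + have -> : i.+1 = (2 * rho)%N by lia.
    rewrite ei; have [-> ->] := Hv rho hr.
    have l1 := Jl rho hr. have b1 := Jb rho ltac:(lia).
    rewrite lerD2r; apply: lammono; lia.
  + have hr1 : (1 <= rho.+1 <= k.+1)%N by lia.
    have -> : i.+1 = (2 * rho.+1).-1%N by lia.
    rewrite ei; have [_ ->] := Hv rho hr; have [-> _] := Hv rho.+1 hr1.
    have hk : (1 <= rho <= k)%N by lia.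
    have /and3P [j1 j2 j3] := Jj rho hk.
    rewrite /= lerD2r; apply: lammono; lia.
- exact: usum.
- exact: vsum.
Qed.
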